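(* Let $\mathcal{H}$ be a finite-dimensional Hilbert space, $\ket{h}\in\mathcal{H}$ a unit vector, and $W_0,W_1,\ldots,W_l$ subspaces of $\mathcal{H}$. For $0\le j\le l$ let $\epsilon_j:=\|\Pi_{W_j}\ket h\|_2^2$. Let $0<\alpha<1/3$, let $\mathbf{W}_\alpha\le\tilde{\mathcal{H}}$ be the $\alpha$-tilted span of $W_1,\ldots,W_l$, and let $\mathbf{W}:=\mathbf{W}_\alpha+W_0\le\tilde{\mathcal H}$ (with $W_0$ embedded via the identity embedding $\mathcal H\hookrightarrow\tilde{\mathcal H}$). Let $\epsilon:=\frac{1-\alpha}{\alpha}\sum_{j=1}^l\epsilon_j$. Then $$\max\Big\{\epsilon_0,\,(1-\alpha)\max_{1\le j\le l}\epsilon_j\Big\}\ \le\ \|\Pi_{\mathbf W}\ket h\|_2^2\ \le\ \frac{3l}{\alpha}(\epsilon_0+\epsilon).$$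
   Context: Tilted span: Let $\mathcal{H}_1,\ldots,\mathcal{H}_l$ be Hilbert spaces each of dimension $\dim\mathcal{H}$, and $\tilde{\mathcal{H}}:=\mathcal{H}\oplus\mathcal{H}_1\oplus\cdots\oplus\mathcal{H}_l$ (orthogonal direct sum). Let $\mathcal{T}_j$ be a linear map taking $\mathcal{H}$ isometrically onto $\mathcal{H}_j$. For $0<\alpha<1$ define $\mathcal{T}_{j,\alpha}:=\sqrt{1-\alpha}\,\mathbb{1}_{\mathcal{H}}+\sqrt{\alpha}\,\mathcal{T}_j:\mathcal{H}\to\tilde{\mathcal{H}}$, with $\mathbb{1}_{\mathcal H}$ the identity embedding. The $\alpha$-tilted span of subspaces $W_1,\dots,W_l\le\mathcal H$ is $\mathbf{W}_\alpha:=\sum_{j=1}^l\mathcal{T}_{j,\alpha}(W_j)$. $\Pi_X$ denotes orthogonal projection onto $X$. *)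

(* Defs.v *)
(* complex finite-dimensional Hilbert spaces as row vectors
   'rV[C]_n over a numClosedFieldType C (e.g. algC), subspaces as row spaces
   of matrices (mxalgebra), inner product and orthogonal projection from
   mathcomp's spectral.v (dotmx, proj_ortho). *)
From HB Require Import structures.
From mathcomp Require Import all_boot all_order all_algebra.
Set Implicit Arguments.
Unset Strict Implicit.
Unset Printing Implicit Defensive.
Import Order.TTheory GRing.Theory Num.Theory.
Local Open Scope ring_scope.

Section Tilted.
Variable C : numClosedFieldType.

(* The big space  H~ = H (+) H_1 (+) ... (+) H_l  with dim H = n is modelled
   as 'rV_(l.+1 * n) = mxvec of an (l+1) x n matrix: block 0 is H, block k
   (k >= 1) is H_k. *)
Definition blk (n l : nat) (k : 'I_l.+1) (v : 'rV[C]_n) : 'rV[C]_(l.+1 * n) :=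
  mxvec (\matrix_(i < l.+1, j < n) ((i == k)%:R * v 0 j)).

Definition blkmx (n l : nat) (k : 'I_l.+1) : 'M[C]_(n, l.+1 * n) :=
  lin1_mx (@blk n l k).

Definition sqnorm_proj (m p : nat) (U : 'M[C]_(p, m)) (x : 'rV[C]_m) : C :=
  dotmx (x *m proj_ortho U) (x *m proj_ortho U).

(* T_{j,alpha} = sqrt(1-alpha) 1_H + sqrt(alpha) T_j, where T_j : H -> H_j is
   the isometry onto block j given by the unitary matrix Tj followed by the
   block embedding.  Here j : 'I_l stands for the index j+1 in {1..l}. *)
Definition tiltmx (n l : nat) (alpha : C) (Tj : 'M[C]_n) (j : 'I_l) :
  'M[C]_(n, l.+1 * n) :=
  sqrtC (1 - alpha) *: @blkmx n l ord0
  + sqrtC alpha *: (Tj *m @blkmx n l (lift ord0 j)).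

(* alpha-tilted span of W_1..W_l (Ws j = W_{j+1}), isometries T j *)
Definition tilted_span (n l : nat) (alpha : C) (T : 'I_l -> 'M[C]_n)
  (Ws : 'I_l -> 'M[C]_n) : 'M[C]_(l.+1 * n) :=
  (\sum_(j < l) <<Ws j *m tiltmx alpha (T j) j>>)%MS.

End Tilted.

(* Main.v *)
Require Import Defs.
From HB Require Import structures.
From mathcomp Require Import all_boot all_order all_algebra ring.
Set Implicit Arguments. Unset Strict Implicit. Unset Printing Implicit Defensive.
Import Order.TTheory GRing.Theory Num.Theory.
Local Open Scope ring_scope.

Section S.
Variable C : numClosedFieldType.

Lemma blk_linear n l k : linear (@blk C n l k).
Proof.
move=> a u v; rewrite /blk -linearP; congr mxvec; apply/matrixP=> i j.
by rewrite !mxE mulrDr mulrCA.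
Qed.

HB.instance Definition _ n l k := GRing.isLinear.Build C _ _ _ (@blk C n l k) (@blk_linear n l k).

Lemma blkmxE n l k (v : 'rV[C]_n) : v *m @blkmx C n l k = @blk C n l k v.
Proof. by rewrite /blkmx mul_rV_lin1. Qed.
Local Notation d := (@dotmx C _).

Lemma dotZl n (a : C) (u v : 'rV[C]_n) : d (a *: u) v = a * d u v.
Proof. by rewrite !dotmxE -scalemxAl mxE. Qed.

Lemma dotZr n (a : C) (u v : 'rV[C]_n) : d u (a *: v) = a^* * d u v.
Proof.
rewrite !dotmxE !mxE mulr_sumr; apply: eq_bigr => i _.
by rewrite !mxE rmorphM /= mulrCA.
Qed.

Definition rk n l (k : 'I_l.+1) (y : 'rV[C]_(l.+1 * n)) : 'rV[C]_n := row k (vec_mx y).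

Lemma dotDr n (u v w : 'rV[C]_n) : d u (v + w) = d u v + d u w.
Proof. exact: linearDr. Qed.
Lemma dot_sumr n I (r : seq I) (u : 'rV[C]_n) (F : I -> 'rV[C]_n) :
  d u (\sum_(i <- r) F i) = \sum_(i <- r) d u (F i).
Proof. exact: linear_sumr. Qed.

Lemma dot_vec n l (y z : 'rV[C]_(l.+1 * n)) : d y z = \sum_k d (rk k y) (rk k z).
Proof.
transitivity (\sum_k \sum_j rk k y 0 j * (rk k z 0 j)^*); last first.
  by apply: eq_bigr => k _; rewrite dotmxE mxE; apply: eq_bigr => j _; rewrite !mxE.
rewrite dotmxE mxE (reindex _ (curry_mxvec_bij _ _)) /= pair_bigA /=.
by apply: eq_bigr => -[k j] _; rewrite !mxE.
Qed.

Lemma rk_blk n l (k m : 'I_l.+1) (v : 'rV[C]_n) : rk k (@blk C n l m v) = (k == m)%:R *: v.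
Proof. by apply/rowP => j; rewrite /rk /blk mxvecK !mxE. Qed.

Lemma rkD n l k (y z : 'rV[C]_(l.+1 * n)) : rk k (y + z) = rk k y + rk k z.
Proof. by rewrite /rk linearD /= linearD. Qed.
Lemma rkZ n l k a (y : 'rV[C]_(l.+1 * n)) : rk k (a *: y) = a *: rk k y.
Proof. by rewrite /rk linearZ /= linearZ. Qed.
Lemma rk_sum n l k I (r : seq I) (F : I -> 'rV[C]_(l.+1 * n)) :
  rk k (\sum_(i <- r) F i) = \sum_(i <- r) rk k (F i).
Proof. by rewrite /rk linear_sum /= linear_sum. Qed.
Local Notation ortho B := (orthomx Num.Def.conjC (mx_of_hermitian (hermitian1mx _)) B).

Lemma proj_dot m p (U : 'M[C]_(p, m)) (x u : 'rV[C]_m) :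
  (u <= U)%MS -> d x u = d (x *m proj_ortho U) u.
Proof.
move=> uU; apply/eqP; rewrite -subr_eq0 -linearBl /=.
have H1 : (x - x *m proj_ortho U <= ortho u)%MS.
  by apply: submx_trans (proj_ortho_compl_sub U x) _; rewrite submx_ortho.
by move/orthomx1P: H1 => H1; rewrite dotmxE H1 mxE.
Qed.

Lemma sqnorm_ge0 m p (U : 'M[C]_(p, m)) x : 0 <= sqnorm_proj U x.
Proof. exact: dnorm_ge0. Qed.

Lemma projA1 m p (U : 'M[C]_(p, m)) (x u : 'rV[C]_m) :
  (u <= U)%MS -> `|d x u| ^+ 2 <= sqnorm_proj U x * d u u.
Proof.
move=> uU; rewrite (proj_dot x uU).
exact: (CauchySchwarz (@dotmx C m) (x *m proj_ortho U) u).1.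
Qed.

Lemma projA2 m p (U : 'M[C]_(p, m)) (x : 'rV[C]_m) (K : C) : 0 <= K ->
  (forall u, (u <= U)%MS -> `|d x u| ^+ 2 <= K * d u u) -> sqnorm_proj U x <= K.
Proof.
move=> K0 H; set q := x *m proj_ortho U.
have qU : (q <= U)%MS by exact: proj_ortho_sub.
have := H q qU; rewrite (proj_dot x qU) -/(sqnorm_proj U x).
have P0 := sqnorm_ge0 U x; rewrite ger0_norm // expr2.
have [->|Pn0] := eqVneq (sqnorm_proj U x) 0; first by [].
by rewrite ler_pM2r // lt_def Pn0.
Qed.

Lemma cancel_le (a c P : C) : 0 <= a -> 0 <= P -> c * a * a <= P * a -> c * a <= P.
Proof.
move=> a0 P0; have [->|an0] := eqVneq a 0; first by rewrite !mulr0.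
by rewrite ler_pM2r // lt_def an0.
Qed.
Lemma F1 (a b s : C) : 0 < s ->
  `|a + b| ^+ 2 <= (1 + s) * `|a| ^+ 2 + (1 + s^-1) * `|b| ^+ 2.
Proof.
move=> s0; apply: le_trans (_ : (`|a| + `|b|) ^+ 2 <= _).
  by rewrite lerXn2r ?nnegrE ?addr_ge0 ?ler_normD.
rewrite -subr_ge0.
have -> : (1 + s) * `|a| ^+ 2 + (1 + s^-1) * `|b| ^+ 2 - (`|a| + `|b|) ^+ 2
   = (s * `|a| - `|b|) ^+ 2 / s.
  by field; rewrite gt_eqF.
apply: divr_ge0; last exact: ltW.
apply: real_exprn_even_ge0 => //.
by rewrite rpredB ?rpredM ?normr_real ?gtr0_real.
Qed.

Lemma F2 l (z : 'I_l -> C) : `|\sum_j z j| ^+ 2 <= l%:R * \sum_j `|z j| ^+ 2.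
Proof.
pose u : 'rV[C]_l := \row_j z j.
pose v : 'rV[C]_l := const_mx 1.
have : `|d u v| ^+ 2 <= d u u * d v v := (CauchySchwarz (@dotmx C l) u v).1.
have -> : d u v = \sum_j z j.
  by rewrite dotmxE mxE; apply: eq_bigr => j _; rewrite !mxE rmorph1 mulr1.
have -> : d u u = \sum_j `|z j| ^+ 2.
  by rewrite dotmxE mxE; apply: eq_bigr => j _; rewrite !mxE normCK.
have -> : d v v = l%:R.
  rewrite dotmxE mxE (eq_bigr (fun _ => 1)); last by move=> j _; rewrite !mxE rmorph1 mulr1.
  by rewrite sumr_const card_ord.
by rewrite mulrC.
Qed.
Lemma rk_blk0 n l (v : 'rV[C]_n) : rk ord0 (@blk C n l ord0 v) = v.
Proof. by rewrite rk_blk eqxx scale1r. Qed.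
Lemma rkS_blk0 n l i (v : 'rV[C]_n) : rk (lift ord0 i) (@blk C n l ord0 v) = 0.
Proof. by rewrite rk_blk scale0r. Qed.

Lemma tiltE n l (al : C) (Tj : 'M[C]_n) (j : 'I_l) (w : 'rV[C]_n) :
  w *m tiltmx al Tj j = sqrtC (1 - al) *: @blk C n l ord0 w
     + sqrtC al *: @blk C n l (lift ord0 j) (w *m Tj).
Proof. by rewrite /tiltmx mulmxDr -!scalemxAr mulmxA !blkmxE. Qed.

Lemma rk0_tilt n l (al : C) (Tj : 'M[C]_n) (j : 'I_l) (w : 'rV[C]_n) :
  rk ord0 (w *m tiltmx al Tj j) = sqrtC (1 - al) *: w.
Proof. by rewrite tiltE rkD !rkZ !rk_blk eqxx scale1r scale0r scaler0 addr0. Qed.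

Lemma rkS_tilt n l (al : C) (Tj : 'M[C]_n) (i j : 'I_l) (w : 'rV[C]_n) :
  rk (lift ord0 i) (w *m tiltmx al Tj j) = (i == j)%:R *: (sqrtC al *: (w *m Tj)).
Proof.
rewrite tiltE rkD !rkZ !rk_blk scale0r scaler0 add0r (inj_eq (@lift_inj _ ord0)).
by rewrite scalerA scalerA mulrC.
Qed.

Lemma rk_decomp n l (al : C) (T : 'I_l -> 'M[C]_n) w0 (w : 'I_l -> 'rV[C]_n) :
  let u := w0 *m @blkmx C n l ord0 + \sum_j w j *m tiltmx al (T j) j in
  rk ord0 u = w0 + sqrtC (1 - al) *: \sum_j w j /\
  forall i, rk (lift ord0 i) u = sqrtC al *: (w i *m T i).
Proof.
move=> u; split.
  by rewrite /u rkD blkmxE rk_blk0 rk_sum scaler_sumr; congr (_ + _);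
     apply: eq_bigr => j _; rewrite rk0_tilt.
move=> i; rewrite /u rkD blkmxE rkS_blk0 add0r rk_sum.
rewrite (bigD1 i) //= big1 ?addr0; first by rewrite rkS_tilt eqxx scale1r.
by move=> j /negPf ji; rewrite rkS_tilt eq_sym ji scale0r.
Qed.

Lemma dot_blk0 n l (h : 'rV[C]_n) (y : 'rV[C]_(l.+1 * n)) :
  d (@blk C n l ord0 h) y = d h (rk ord0 y).
Proof.
rewrite dot_vec big_ord_recl rk_blk0 big1 ?addr0 // => i _.
by rewrite rkS_blk0 linear0l.
Qed.

Lemma dot_split n l (y : 'rV[C]_(l.+1 * n)) :
  d y y = d (rk ord0 y) (rk ord0 y) + \sum_(i < l) d (rk (lift ord0 i) y) (rk (lift ord0 i) y).
Proof. by rewrite dot_vec big_ord_recl. Qed.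

Lemma dot_unitary n (Tj : 'M[C]_n) (v w : 'rV[C]_n) : Tj \is unitarymx ->
  d (v *m Tj) (w *m Tj) = d v w.
Proof.
move=> /unitarymxP U; rewrite !dotmxE trmx_mul map_mxM mulmxA -(mulmxA v).
by rewrite U mulmx1.
Qed.
Lemma final_sum l (al L e0 E : C) (ej N : 'I_l -> C) :
  0 < al -> al < 1 -> 0 <= L -> 0 <= e0 -> (forall j, 0 <= ej j) ->
  (forall j, 0 <= E - ej j) -> (forall j, 0 <= N j) ->
  (1 + (2 / al)^-1) * ((1 - al) * (L * \sum_j 2 * (ej j + e0) * N j))
   <= 3 * L / al * (e0 + (1 - al) / al * E) * \sum_j al * N j.
Proof.
move=> a0 a1 L0 he0 hej Ej N0.
have an0 : al != 0 by rewrite gt_eqF.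
have n20 : (2 : C) != 0 by rewrite pnatr_eq0.
have b0 : 0 <= 1 - al by rewrite subr_ge0 ltW.
rewrite !mulr_sumr; apply: ler_sum => j _.
rewrite -subr_ge0.
have -> : 3 * L / al * (e0 + (1 - al) / al * E) * (al * N j) -
   (1 + (2 / al)^-1) * ((1 - al) * (L * (2 * (ej j + e0) * N j))) =
   L * ((1 + al + al * al) * e0 + 3 * (1 - al) / al * (E - ej j)
     + (1 - al) * (1 - al) * (3 + al) / al * ej j) * N j.
  by field.
apply: mulr_ge0 => //; apply: mulr_ge0 => //.
have a0' : 0 <= al by exact: ltW.
apply: addr_ge0; first apply: addr_ge0.
- by apply: mulr_ge0 => //; rewrite !addr_ge0 ?mulr_ge0.
- by apply: mulr_ge0 => //; apply: divr_ge0 => //; rewrite mulr_ge0.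
- apply: mulr_ge0 => //; apply: divr_ge0 => //.
  apply: mulr_ge0; [exact: mulr_ge0 | apply: addr_ge0 => //].
Qed.
End S.

Theorem corollary1 (C : numClosedFieldType) (n l : nat) (hl : (0 < l)%N)
  (h : 'rV[C]_n) (hunit : dotmx h h = 1)
  (W0 : 'M[C]_n) (Ws : 'I_l -> 'M[C]_n)
  (T : 'I_l -> 'M[C]_n) (hT : forall j, T j \is unitarymx)
  (alpha : C) (ha0 : 0 < alpha) (ha1 : alpha < 3^-1) :
  let eps0 := sqnorm_proj W0 h in
  let epsj := fun j : 'I_l => sqnorm_proj (Ws j) h in
  let Wb := (tilted_span alpha T Ws + W0 *m @blkmx C n l ord0)%MS in
  let P := sqnorm_proj Wb (h *m @blkmx C n l ord0) in
  let eps := (1 - alpha) / alpha * \sum_(j < l) epsj j in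
  [/\ eps0 <= P,
      (forall j : 'I_l, (1 - alpha) * epsj j <= P)
    & P <= (3 * l%:R) / alpha * (eps0 + eps)].
Proof.
move=> eps0 epsj Wb P eps.
set x := h *m @blkmx C n l ord0.
have a1 : alpha < 1.
  apply: lt_le_trans ha1 _; rewrite invf_le1 ?ler1n //.
have b0 : 0 <= 1 - alpha by rewrite subr_ge0 ltW.
have ns1 : sqrtC (1 - alpha) * (sqrtC (1 - alpha))^* = 1 - alpha by rewrite -normCK -normrX sqrtCK ger0_norm.
have ns2 : sqrtC alpha * (sqrtC alpha)^* = alpha by rewrite -normCK -normrX sqrtCK ger0_norm // ltW.
have P0 : 0 <= P by exact: sqnorm_ge0.
have xE : x = @blk C n l ord0 h by rewrite /x blkmxE.
split.
- set q0 := h *m proj_ortho W0.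
  have q0W : (q0 <= W0)%MS by exact: proj_ortho_sub.
  have uW : (q0 *m @blkmx C n l ord0 <= Wb)%MS.
    by apply: submx_trans (submxMr _ q0W) _; rewrite /Wb addsmxSr.
  have := projA1 x uW; rewrite -/P xE dot_blk0 blkmxE rk_blk0.
  rewrite dot_split rk_blk0 big1 ?addr0; last by move=> i _; rewrite rkS_blk0 linear0l.
  rewrite (proj_dot h q0W) -/eps0 => H.
  have e0 : 0 <= eps0 by exact: sqnorm_ge0.
  rewrite -[eps0]mul1r; apply: cancel_le => //.
  by move: H; rewrite ger0_norm // mul1r expr2.
- move=> j; set q := h *m proj_ortho (Ws j).
  have qW : (q <= Ws j)%MS by exact: proj_ortho_sub.
  have uW : (q *m tiltmx alpha (T j) j <= Wb)%MS.
    apply: submx_trans (submxMr _ qW) _; rewrite /Wb /tilted_span.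
    apply: submx_trans (addsmxSl _ _); apply: (sumsmx_sup j) => //.
    by rewrite genmxE.
  have := projA1 x uW; rewrite -/P xE dot_blk0 rk0_tilt dotZr.
  rewrite dot_split rk0_tilt dotZl dotZr.
  rewrite (bigD1 j) //= big1 ?addr0; last first.
    by move=> i /negPf ij; rewrite rkS_tilt ij scale0r linear0l.
  rewrite rkS_tilt eqxx scale1r dotZl dotZr dot_unitary //.
  rewrite (proj_dot h qW) -/(epsj j) => H.
  have ej : 0 <= epsj j by exact: sqnorm_ge0.
  have E : dotmx q q = epsj j by [].
  move: H; rewrite -/q E normrM norm_conjC exprMn normCK ns1 ger0_norm //.
  rewrite !mulrA ns1 ns2 -mulrDl subrK mul1r => H.
  apply: cancel_le => //; by rewrite -mulrA -expr2.
- set E := \sum_(j < l) epsj j.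
  have L1 : 1 <= l%:R :> C by rewrite ler1n.
  have L0 : 0 <= l%:R :> C by rewrite ler0n.
  have e0 : 0 <= eps0 by exact: sqnorm_ge0.
  have ej : forall j, 0 <= epsj j by move=> j; exact: sqnorm_ge0.
  have E0 : 0 <= E by apply: sumr_ge0 => j _.
  have Ej : forall j, 0 <= E - epsj j.
    by move=> j; rewrite /E (bigD1 j) //= addrC addrK sumr_ge0.
  have a0 : 0 <= alpha by exact: ltW.
  have an0 : alpha != 0 by rewrite gt_eqF.
  have n20 : (2 : C) != 0 by rewrite pnatr_eq0.
  apply: projA2 => [|u].
    rewrite mulr_ge0 ?divr_ge0 ?mulr_ge0 ?ler0n // addr_ge0 // mulr_ge0 //.
    by rewrite divr_ge0.
  rewrite /Wb => /sub_addsmxP [[v1 v2] /= ->].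
  have : (v1 *m tilted_span alpha T Ws <=
      \sum_j <<Ws j *m tiltmx alpha (T j) j>>)%MS by exact: submxMl.
  move/sub_sumsmxP => [vv Hv].
  pose X j := Ws j *m tiltmx alpha (T j) j.
  pose w j := vv j *m <<X j>>%MS *m pinvmx (X j) *m Ws j.
  have hw : forall j, w j *m tiltmx alpha (T j) j = vv j *m <<X j>>%MS.
    move=> j; rewrite /w -mulmxA -/(X j) mulmxKpV //.
    by apply: submx_trans (submxMl _ _) _; rewrite genmxE.
  have wW : forall j, (w j <= Ws j)%MS by move=> j; exact: submxMl.
  pose w0 := v2 *m W0.
  have w0W : (w0 <= W0)%MS by exact: submxMl.
  have -> : v1 *m tilted_span alpha T Ws + v2 *m (W0 *m @blkmx C n l ord0)
      = w0 *m @blkmx C n l ord0 + \sum_j w j *m tiltmx alpha (T j) j.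
    rewrite Hv mulmxA addrC; congr (_ + _); apply: eq_bigr => j _.
    by rewrite hw.
  have [R0 RS] := rk_decomp alpha T w0 w.
  rewrite ?xE blkmxE dot_blk0 dot_split R0.
  rewrite (eq_bigr (fun i => alpha * dotmx (w i) (w i))); last first.
    by move=> i _; rewrite RS dotZl dotZr mulrA ns2 dot_unitary.
  set A := w0 + sqrtC (1 - alpha) *: \sum_j w j.
  set q0 := h *m proj_ortho W0.
  have key : dotmx h A = dotmx q0 A +
      (sqrtC (1 - alpha))^* * \sum_j (dotmx h (w j) - dotmx q0 (w j)).
    have hw0 : dotmx h w0 = dotmx q0 w0 := proj_dot h w0W.
    rewrite /A !dotDr !dotZr !dot_sumr hw0 sumrB; ring.
  rewrite key.
  have Ha : `|dotmx q0 A| ^+ 2 <= eps0 * dotmx A A :=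
    (CauchySchwarz (@dotmx C n) q0 A).1.
  have Hc : forall j, `|dotmx h (w j) - dotmx q0 (w j)| ^+ 2 <=
      2 * (epsj j + eps0) * dotmx (w j) (w j).
    move=> j; apply: le_trans (F1 _ _ ltr01) _.
    rewrite normrN invr1.
    have H1 := projA1 h (wW j).
    have H2 : `|dotmx q0 (w j)| ^+ 2 <= eps0 * dotmx (w j) (w j) :=
      (CauchySchwarz (@dotmx C n) q0 (w j)).1.
    have -> : 2 * (epsj j + eps0) * dotmx (w j) (w j) =
       (1 + 1) * (epsj j * dotmx (w j) (w j)) + (1 + 1) * (eps0 * dotmx (w j) (w j)).
      by ring.
    by rewrite lerD // ler_wpM2l // addr_ge0.
  set NA := dotmx A A.
  have NA0 : 0 <= NA by exact: dnorm_ge0.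
  have N0 : forall j, 0 <= dotmx (w j) (w j) by move=> j; exact: dnorm_ge0.
  have Hb : `|(sqrtC (1 - alpha))^* * \sum_j (dotmx h (w j) - dotmx q0 (w j))| ^+ 2
      <= (1 - alpha) * (l%:R * \sum_j (2 * (epsj j + eps0) * dotmx (w j) (w j))).
    rewrite normrM exprMn norm_conjC normCK ns1 ler_wpM2l //.
    apply: le_trans (F2 _) _; rewrite ler_wpM2l //.
    by apply: ler_sum => j _; exact: Hc.
  have s0 : 0 < 2 / alpha by rewrite divr_gt0 ?ltr0n.
  apply: le_trans (F1 _ _ s0) _.
  apply: le_trans (lerD (ler_wpM2l _ Ha) (ler_wpM2l _ Hb)) _.
  - by rewrite addr_ge0 // ltW.
  - by rewrite addr_ge0 // invr_ge0 ltW.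
  rewrite mulrDr; apply: lerD.
    rewrite mulrA; apply: ler_wpM2r => //.
    rewrite -subr_ge0.
    have -> : 3 * l%:R / alpha * (eps0 + eps) - (1 + 2 / alpha) * eps0 =
       ((3 * (l%:R - 1) + (1 - alpha)) / alpha) * eps0 +
       3 * l%:R * (1 - alpha) / (alpha * alpha) * E.
      by rewrite /eps -/E; field.
    have L10 : 0 <= l%:R - 1 :> C by rewrite subr_ge0.
    apply: addr_ge0; apply: mulr_ge0 => //; apply: divr_ge0; rewrite ?mulr_ge0 //.
    by apply: addr_ge0 => //; rewrite mulr_ge0.
  exact: final_sum.
Qed.
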